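(* Let $F:\mathbb{R}^n\rightrightarrows\mathbb{R}^n$ be upper semicontinuous with $F(x)$ nonempty, compact and convex for all $x$, and consider $\Sigma:\dot x\in F(x)$. A closed set $K\subset\mathbb{R}^n$ is forward invariant for $\Sigma$ if $$F(x)\subset T_K(y)\qquad\forall x\in\mathbb{R}^n\setminus K,\ \forall y\in\mathrm{Proj}_K(x).$$
   Context: A closed set $K$ is forward invariant for $\Sigma$ if every solution (locally absolutely continuous $\phi$ with $\dot\phi(t)\in F(\phi(t))$ a.e.) starting in $K$ satisfies $\phi(\mathrm{dom}\,\phi)\subset K$. $\mathrm{Proj}_K(x):=\{y\in K:|x-y|=\inf_{z\in K}|x-z|\}$. $T_K(y)$ denotes the contingent (Bouligand tangent) cone to $K$ at $y$: $T_K(y):=\{v\in\mathbb{R}^n:\liminf_{h\to0^+}\frac{|y+hv|_K}{h}=0\}$, where $|z|_K$ is the distance from $z$ to $K$. *)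

(* Defs.v *)
From HB Require Import structures.
From mathcomp Require Import all_boot all_order all_algebra.
From mathcomp Require Import all_classical all_reals all_analysis.
Set Implicit Arguments. Unset Strict Implicit. Unset Printing Implicit Defensive.
Import Order.TTheory GRing.Theory Num.Theory.
Import numFieldNormedType.Exports.
Local Open Scope classical_set_scope.
Local Open Scope ring_scope.

Section Defs.
Variables (R : realType) (n : nat).
Local Notation V := 'rV[R]_n.

Definition enorm (x : V) : R := Num.sqrt (\sum_(i < n) (x ord0 i) ^+ 2).

Definition dist_set (K : set V) (z : V) : R := inf [set enorm (z - y) | y in K].

Definition Proj (K : set V) (x : V) : set V :=
  [set y | K y /\ enorm (x - y) = dist_set K x].

(* Contingent cone: liminf_{h -> 0+} |y + h v|_K / h = 0.  Since the quotient
   is nonnegative, this is: for all eps, delta > 0 there is h in (0, delta)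
   with |y + h v|_K / h < eps. *)
Definition tangent_cone (K : set V) (y : V) : set V :=
  [set v | forall eps delta : R, 0 < eps -> 0 < delta ->
     exists h : R, [/\ 0 < h, h < delta & dist_set K (y + h *: v) / h < eps]].

Definition usc (F : V -> set V) : Prop :=
  forall x (U : set V), open U -> F x `<=` U -> \forall y \near x, F y `<=` U.

Definition abs_cont_on (phi : R -> V) (a b : R) : Prop :=
  forall eps : R, 0 < eps -> exists2 delta : R, 0 < delta &
    forall (k : nat) (s t : nat -> R),
      (forall i, (i < k)%N -> a <= s i /\ s i <= t i /\ t i <= b) ->
      (forall i j, (i < k)%N -> (j < k)%N -> i <> j -> t i <= s j \/ t j <= s i) ->
      \sum_(i < k) (t i - s i) < delta ->
      \sum_(i < k) enorm (phi (t i) - phi (s i)) < eps.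

Definition loc_abs_cont (I : set R) (phi : R -> V) : Prop :=
  forall a b, I a -> I b -> abs_cont_on phi a b.

Definition is_solution (F : V -> set V) (I : set R) (phi : R -> V) : Prop :=
  [/\ is_interval I, loc_abs_cont I phi &
      {ae (@lebesgue_measure R), forall t, I t ->
          derivable phi t 1 /\ F (phi t) ('D_1 phi t)}].

Definition forward_invariant (F : V -> set V) (K : set V) : Prop :=
  forall (I : set R) (phi : R -> V) (t0 : R),
    I t0 -> (forall t, I t -> t0 <= t) -> is_solution F I phi ->
    K (phi t0) -> forall t, I t -> K (phi t).

End Defs.

(* Main.v *)
Require Import Defs.
From HB Require Import structures.
From mathcomp Require Import all_boot all_order all_algebra.
From mathcomp Require Import all_classical all_reals all_analysis.
From mathcomp Require Import ring lra zify.
Import Order.TTheory GRing.Theory Num.Theory.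
Import numFieldNormedType.Exports.
Local Open Scope classical_set_scope.
Local Open Scope ring_scope.
Set Implicit Arguments. Unset Strict Implicit. Unset Printing Implicit Defensive.
Section Euc.
Variables (R : realType) (n : nat).
Local Notation V := 'rV[R]_n.
Implicit Types a b c : V.
Definition ip (a b : V) : R := \sum_(i < n) a ord0 i * b ord0 i.

Lemma ipC a b : ip a b = ip b a.
Proof. by apply: eq_bigr => i _; rewrite mulrC. Qed.
Lemma ipDl a b c : ip (a + b) c = ip a c + ip b c.
Proof. by rewrite /ip -big_split; apply: eq_bigr => i _; rewrite !mxE mulrDl. Qed.
Lemma ipNl a c : ip (- a) c = - ip a c.
Proof. by rewrite /ip -sumrN; apply: eq_bigr => i _; rewrite !mxE mulNr. Qed.
Lemma ipZl (k : R) a c : ip (k *: a) c = k * ip a c.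
Proof. by rewrite /ip mulr_sumr; apply: eq_bigr => i _; rewrite !mxE mulrA. Qed.
Lemma ipDr a b c : ip c (a + b) = ip c a + ip c b.
Proof. by rewrite ipC ipDl !(ipC c). Qed.
Lemma ipZr (k : R) a c : ip c (k *: a) = k * ip c a.
Proof. by rewrite ipC ipZl ipC. Qed.
Lemma ipBl a b c : ip (a - b) c = ip a c - ip b c.
Proof. by rewrite ipDl ipNl. Qed.
Lemma ipNr a c : ip c (- a) = - ip c a.
Proof. by rewrite ipC ipNl ipC. Qed.
Lemma ipBr a b c : ip c (a - b) = ip c a - ip c b.
Proof. by rewrite ipDr ipNr. Qed.
Lemma ip_ge0 a : 0 <= ip a a.
Proof. by apply: sumr_ge0 => i _; rewrite -expr2 sqr_ge0. Qed.
Lemma enormE a : enorm a = Num.sqrt (ip a a).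
Proof. by rewrite /enorm /ip; congr Num.sqrt; apply: eq_bigr => i _; rewrite expr2. Qed.
Lemma enorm_ge0 a : 0 <= enorm a.
Proof. by rewrite enormE sqrtr_ge0. Qed.
Lemma enorm_sq a : enorm a ^+ 2 = ip a a.
Proof. by rewrite enormE sqr_sqrtr // ip_ge0. Qed.

Lemma ip_sqD a b : ip (a + b) (a + b) = ip a a + 2 * ip a b + ip b b.
Proof. rewrite ipDl !ipDr (ipC b a); ring. Qed.

Lemma ip0_eq0 (b : V) : ip b b = 0 -> forall i, b ord0 i = 0.
Proof.
move=> /eqP; rewrite psumr_eq0 => [/allP H i|i _]; last by rewrite -expr2 sqr_ge0.
by have /(_ (mem_index_enum i))/implyP/(_ isT)/eqP := H i; rewrite -expr2 => /eqP; rewrite sqrf_eq0 => /eqP.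
Qed.

Lemma CS2 a b : ip a b ^+ 2 <= ip a a * ip b b.
Proof.
have [B0|Bn0] := eqVneq (ip b b) 0.
  have -> : ip a b = 0.
    by rewrite /ip big1 // => i _; rewrite (ip0_eq0 B0) mulr0.
  by rewrite expr0n /= mulr_ge0 // ip_ge0.
have Bp : 0 < ip b b by rewrite lt_def Bn0 ip_ge0.
set l := ip a b / ip b b.
have := ip_ge0 (a - l *: b).
rewrite ipBl !ipBr !ipZl !ipZr (ipC b a) => H.
have : 0 <= ip b b * (ip a a - l * ip a b - (l * ip a b - l * (l * ip b b))) by rewrite mulr_ge0 // ltW.
rewrite /l; move=> H2.
have E : ip b b * (ip a a - ip a b / ip b b * ip a b - (ip a b / ip b b * ip a b - ip a b / ip b b * (ip a b / ip b b * ip b b))) = ip a a * ip b b - ip a b ^+ 2.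
  by field.
by move: H2; rewrite E subr_ge0.
Qed.
End Euc.
Section Euc2.
Variables (R : realType) (n : nat).
Local Notation V := 'rV[R]_n.
Implicit Types a b c : V.

Lemma CS a b : ip a b <= enorm a * enorm b.
Proof.
have [h|h] := lerP (ip a b) 0.
  by apply: le_trans h _; rewrite mulr_ge0 // enorm_ge0.
rewrite !enormE -sqrtrM ?ip_ge0 //.
have -> : ip a b = Num.sqrt (ip a b ^+ 2) by rewrite sqrtr_sqr ger0_norm // ltW.
by rewrite ler_sqrt ?mulr_ge0 ?ip_ge0 // CS2.
Qed.

Lemma enorm_sqD a b : enorm (a + b) ^+ 2 = enorm a ^+ 2 + 2 * ip a b + enorm b ^+ 2.
Proof. by rewrite !enorm_sq ip_sqD. Qed.

Lemma enormD a b : enorm (a + b) <= enorm a + enorm b.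
Proof.
have H : enorm (a + b) ^+ 2 <= (enorm a + enorm b) ^+ 2.
  rewrite enorm_sqD sqrrD; have := CS a b.
  move=> h; lra.
rewrite -(@ler_pXn2r _ 2) //= ?nnegrE ?addr_ge0 ?enorm_ge0 //.
Qed.

Lemma enormZ (k : R) a : enorm (k *: a) = `|k| * enorm a.
Proof.
rewrite !enormE ipZl ipZr mulrA -expr2 sqrtrM ?sqr_ge0 //.
by rewrite sqrtr_sqr.
Qed.

Lemma enormN a : enorm (- a) = enorm a.
Proof. by rewrite -scaleN1r enormZ normrN normr1 mul1r. Qed.

Lemma enormB a b : enorm (a - b) = enorm (b - a).
Proof. by rewrite -enormN opprB. Qed.

Lemma enorm0 : enorm (0 : V) = 0.
Proof. by rewrite -(scale0r (0:V)) enormZ normr0 mul0r. Qed.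

Lemma coord_le_enorm a i : `|a ord0 i| <= enorm a.
Proof.
rewrite enormE -sqrtr_sqr ler_sqrt ?ip_ge0 // /ip (bigD1 i) //= -expr2 lerDl.
by apply: sumr_ge0 => j _; rewrite -expr2 sqr_ge0.
Qed.

Lemma coord_le_norm a i : `|a ord0 i| <= `|a|.
Proof.
rewrite [leRHS]/Num.norm /= mx_normrE.
apply: (@le_trans _ _ (`|a (ord0, i).1 (ord0, i).2|)) => //.
exact: (@le_bigmax _ _ _ 0 (fun ij : 'I_1 * 'I_n => `|a ij.1 ij.2|) (ord0, i)).
Qed.

Lemma norm_le_enorm a : `|a| <= enorm a.
Proof.
rewrite [leLHS]/Num.norm /= mx_normrE.
apply/bigmax_leP; split; first exact: enorm_ge0.
by move=> [i j] _ /=; rewrite (ord1 i); exact: coord_le_enorm.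
Qed.

Lemma enorm_le_norm a : enorm a <= n.+1%:R * `|a|.
Proof.
rewrite enormE -(@ger0_norm _ (n.+1%:R * `|a|)) ?mulr_ge0 // -sqrtr_sqr.
rewrite ler_sqrt ?sqr_ge0 // /ip.
apply: (@le_trans _ _ (\sum_(i < n) `|a|^+2)).
  apply: ler_sum => i _; rewrite -expr2 -real_normK ?num_real //.
  by rewrite lerXn2r ?nnegrE ?normr_ge0 // coord_le_norm.
rewrite sumr_const card_ord exprMn -[X in X <= _]mulr_natl.
apply: ler_wpM2r; first exact: sqr_ge0.
rewrite expr2 -natrM ler_nat; lia.
Qed.
End Euc2.
Section Dist.
Variables (R : realType) (n : nat).
Local Notation V := 'rV[R]_n.
Implicit Types a b y z : V.
Variable K : set V.

Lemma dist_lb z : lbound [set enorm (z - y) | y in K] 0.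
Proof. by move=> _ [y _ <-]; exact: enorm_ge0. Qed.

Lemma dist_ge0 z : 0 <= dist_set K z.
Proof.
have [K0|/set0P[y Ky]] := eqVneq K set0.
  by rewrite /dist_set K0 image_set0 inf0.
apply: lb_le_inf; last exact: dist_lb.
by exists (enorm (z - y)), y.
Qed.

Lemma dist_le z y : K y -> dist_set K z <= enorm (z - y).
Proof.
move=> Ky; apply: ge_inf; last by exists y.
by exists 0; exact: dist_lb.
Qed.

Lemma dist_lt z c : K !=set0 -> dist_set K z < c -> exists2 y, K y & enorm (z - y) < c.
Proof.
move=> [y0 Ky0] /inf_lt[]; first by exists (enorm (z - y0)), y0.
by move=> _ [y Ky <-] h; exists y.
Qed.

Lemma dist_lip a b : dist_set K a <= dist_set K b + enorm (a - b).
Proof.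
have [K0|/set0P[y0 Ky0]] := eqVneq K set0.
  by rewrite /dist_set K0 !image_set0 inf0 add0r enorm_ge0.
rewrite -lerBlDr; apply: lb_le_inf; first by exists (enorm (b - y0)), y0.
move=> _ [y Ky <-]; rewrite lerBlDr.
apply: le_trans (dist_le a Ky) _.
have -> : a - y = (b - y) + (a - b) by rewrite [RHS]addrC addrA subrK.
exact: enormD.
Qed.

Lemma dist_in z : K z -> dist_set K z = 0.
Proof.
move=> Kz; apply/le_anti; rewrite dist_ge0 andbT.
by have := dist_le z Kz; rewrite subrr enorm0.
Qed.

Lemma dist0_in z : closed K -> K !=set0 -> dist_set K z = 0 -> K z.
Proof.
move=> cK K0 d0; apply: cK => B /nbhs_ballP[e e0 sB].
have [y Ky hy] : exists2 y, K y & enorm (z - y) < e by apply: dist_lt; rewrite ?d0.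
exists y; split => //; apply: sB.
rewrite -ball_normE /ball_ /=.
exact: le_lt_trans (norm_le_enorm _) hy.
Qed.
End Dist.
Section Proj.
Variables (R : realType) (n : nat).
Local Notation V := 'rV[R]_n.
Implicit Types a b y z : V.

Lemma enorm_rev a b : `|enorm a - enorm b| <= enorm (a - b).
Proof.
have h1 := enormD b (a - b); rewrite addrC subrK in h1.
have h2 := enormD a (b - a); rewrite addrC subrK -enormB in h2.
rewrite ler_norml; apply/andP; split; lra.
Qed.

Lemma enorm_cont z : continuous (fun y : V => enorm (z - y)).
Proof.
move=> x; apply/(@cvgrPdist_lt _ _ _ (nbhs x) (nbhs_filter x)) => e e0.
apply/nbhs_ballP; exists (e / n.+1%:R) => /=; first by rewrite divr_gt0.
move=> y; rewrite -ball_normE /= => hy.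
apply: le_lt_trans (enorm_rev _ _) _.
have -> : z - x - (z - y) = y - x by rewrite opprB addrC addrA subrK.
apply: le_lt_trans (enorm_le_norm _) _.
by rewrite -ltr_pdivlMl // mulrC -normrN opprB.
Qed.

Lemma enorm_cont_at z : continuous (fun y : V => enorm (z - y)).
Proof. exact: enorm_cont. Qed.
Arguments enorm_cont_at : clear implicits.
Lemma proj_exists (K : set V) z : closed K -> K !=set0 ->
  exists2 y, K y & enorm (z - y) = dist_set K z.
Proof.
move=> cK K0.
have [y0 Ky0 h0] : exists2 y, K y & enorm (z - y) < dist_set K z + 1.
  by apply: dist_lt => //; rewrite ltrDl.
pose A := K `&` [set y | enorm (z - y) <= dist_set K z + 1].
have A0 : A !=set0 by exists y0; split => //; exact: ltW.
have cA : compact A.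
  apply: bounded_closed_compact.
    exists (enorm z + dist_set K z + 1); split; first exact: num_real.
    move=> M hM y [_ hy] /=.
    apply: le_trans (norm_le_enorm _) _.
    have -> : y = z - (z - y) by rewrite opprB addrC subrK.
    apply: le_trans (enormD _ _) _; rewrite enormN.
    apply: ltW; apply: le_lt_trans hM; rewrite -addrA lerD2l //.
  apply: closedI => //.
  have := @closed_comp _ R (fun y => enorm (z - y)) [set r | r <= dist_set K z + 1] (fun x _ => enorm_cont_at z x) (@closed_le _ (dist_set K z + 1)).
  by [].
have [y /set_mem [Ky hy] ymin] := compact_EVT_min A0 cA (continuous_subspaceT (enorm_cont_at z)).
exists y => //; apply/le_anti; rewrite dist_le // andbT.
apply: lb_le_inf; first by exists (enorm (z - y0)), y0.
move=> _ [w Kw <-].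
have [hw|hw] := lerP (enorm (z - w)) (dist_set K z + 1).
  by apply: ymin; apply/mem_set; split.
apply: le_trans hy _; exact: ltW.
Qed.
End Proj.
Section Prox.
Variables (R : realType) (n : nat).
Local Notation V := 'rV[R]_n.
Implicit Types a b y z x v w : V.

Lemma sq_le (a b : R) : 0 <= a -> a <= b -> a ^+ 2 <= b ^+ 2.
Proof. by move=> a0 ab; rewrite lerXn2r // nnegrE // (le_trans a0). Qed.

Lemma prox_ineq (K : set V) x y v : K y -> enorm (x - y) = dist_set K x ->
  tangent_cone K y v -> ip (x - y) v <= 0.
Proof.
move=> Ky hD Tv; rewrite leNgt; apply/negP => c0.
set c := ip (x - y) v in c0; set D := enorm (x - y); set N := enorm v.
have D0 : 0 <= D by exact: enorm_ge0.
have N0 : 0 <= N by exact: enorm_ge0.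
set eps := Num.min 1 (c / (4 * (D + 1))).
have eps0 : 0 < eps by rewrite lt_min ltr01 divr_gt0 // mulr_gt0 // ltr_wpDl.
have eps1 : eps <= 1 by rewrite ge_min lexx.
have epsD : D * eps <= c / 4.
  have : eps <= c / (4 * (D + 1)) by rewrite ge_min lexx orbT.
  move=> h; apply: (le_trans (ler_wpM2l D0 h)).
  have D1 : D + 1 != 0 by rewrite gt_eqF // ltr_wpDl.
  have -> : D * (c / (4 * (D + 1))) = c / 4 * (D / (D + 1)) by field; rewrite D1.
  apply: ler_piMr; first by rewrite divr_ge0 // ltW.
  by rewrite ler_pdivrMr ?mul1r ?lerDl // ltr_wpDl.
set del := c / (1 + N) ^+ 2.
have del0 : 0 < del by rewrite divr_gt0 // exprn_gt0 // ltr_wpDr.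
have [h [h0 hdel hd]] := Tv eps del eps0 del0.
have hd' : dist_set K (y + h *: v) < eps * h by rewrite -ltr_pdivrMr.
have [z Kz hz] : exists2 z, K z & enorm (y + h *: v - z) < eps * h.
  by apply: dist_lt => //; exists y.
set w := y + h *: v - z in hz.
set W := enorm w.
have W0 : 0 <= W by exact: enorm_ge0.
have Exz : x - z = (x - y) + (w - h *: v).
  by apply/rowP => i; rewrite /w !mxE; ring.
have Dle : D <= enorm (x - z) by rewrite /D hD dist_le.
have Dsq : D ^+ 2 <= enorm (x - z) ^+ 2 by apply: sq_le.
have E1 : enorm (x - z) ^+ 2 = D ^+ 2 + 2 * ip (x - y) (w - h *: v) + enorm (w - h *: v) ^+ 2.
  by rewrite Exz enorm_sqD.
have E2 : ip (x - y) (w - h *: v) = ip (x - y) w - h * c by rewrite ipBr ipZr.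
have E3 : ip (x - y) w <= D * W by exact: CS.
have E4 : enorm (w - h *: v) <= W + h * N.
  by apply: le_trans (enormD _ _) _; rewrite enormN enormZ ger0_norm ?(ltW h0).
have E4' : enorm (w - h *: v) ^+ 2 <= (W + h * N) ^+ 2 by apply: sq_le E4; exact: enorm_ge0.
have E5 : D * W <= D * eps * h by rewrite -mulrA ler_wpM2l // ltW.
have E6 : (W + h * N) ^+ 2 <= (h * (1 + N)) ^+ 2.
  apply: sq_le; first by rewrite addr_ge0 // mulr_ge0 // ltW.
  rewrite mulrDr mulr1 lerD2r; apply: ltW; apply: (lt_le_trans hz).
  by apply: ler_piMl => //; exact: ltW.
have E7 : (h * (1 + N)) ^+ 2 <= h * c.
  have -> : (h * (1 + N)) ^+ 2 = h * (h * (1 + N) ^+ 2) by ring.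
  apply: ler_wpM2l; first exact: ltW.
  by rewrite -ler_pdivlMr ?exprn_gt0 ?ltr_wpDr // ltW.
have E8 : D * eps * h <= c / 4 * h by apply: ler_wpM2r => //; exact: ltW.
nra.
Qed.
End Prox.
Section Step.
Variables (R : realType) (n : nat).
Local Notation V := 'rV[R]_n.
Implicit Types a b y z x v w : V.

Lemma dini_step (K : set V) x y v (eps : R) : K y -> enorm (x - y) = dist_set K x ->
  ip (x - y) v <= 0 -> 0 < eps ->
  exists2 eta : R, 0 < eta & exists2 r : R, 0 < r &
    forall h : R, 0 < h -> h < r -> forall z, enorm (z - (x + h *: v)) <= eta * h ->
      dist_set K z ^+ 2 <= dist_set K x ^+ 2 + eps * h.
Proof.
move=> Ky hD c0 e0.
set D := enorm (x - y); set N := enorm v.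
have D0 : 0 <= D by exact: enorm_ge0.
have N0 : 0 <= N by exact: enorm_ge0.
set eta := Num.min 1 (eps / (4 * (D + 1))).
have eta0 : 0 < eta by rewrite lt_min ltr01 divr_gt0 // mulr_gt0 // ltr_wpDl.
have eta1 : eta <= 1 by rewrite ge_min lexx.
have etaD : D * eta <= eps / 4.
  have : eta <= eps / (4 * (D + 1)) by rewrite ge_min lexx orbT.
  move=> h; apply: (le_trans (ler_wpM2l D0 h)).
  have D1 : D + 1 != 0 by rewrite gt_eqF // ltr_wpDl.
  have -> : D * (eps / (4 * (D + 1))) = eps / 4 * (D / (D + 1)) by field; rewrite D1.
  apply: ler_piMr; first by rewrite divr_ge0 // ltW.
  by rewrite ler_pdivrMr ?mul1r ?lerDl // ltr_wpDl.
exists eta => //.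
set r := eps / (2 * (1 + N) ^+ 2).
have r0 : 0 < r by rewrite divr_gt0 // mulr_gt0 // exprn_gt0 // ltr_wpDr.
exists r => // h h0 hr z hz.
set w := z - (x + h *: v) in hz.
set W := enorm w.
have W0 : 0 <= W by exact: enorm_ge0.
have Ezy : z - y = (x - y) + (h *: v + w) by apply/rowP => i; rewrite /w !mxE; ring.
have dz : dist_set K z ^+ 2 <= enorm (z - y) ^+ 2 by apply: sq_le; [exact: dist_ge0| exact: dist_le].
have E1 : enorm (z - y) ^+ 2 = D ^+ 2 + 2 * ip (x - y) (h *: v + w) + enorm (h *: v + w) ^+ 2.
  by rewrite Ezy enorm_sqD.
have E2 : ip (x - y) (h *: v + w) = h * ip (x - y) v + ip (x - y) w by rewrite ipDr ipZr.
have E3 : ip (x - y) w <= D * W by exact: CS.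
have E2' : h * ip (x - y) v <= 0 by rewrite mulr_ge0_le0 // ltW.
have E4 : enorm (h *: v + w) <= h * N + W.
  by apply: le_trans (enormD _ _) _; rewrite enormZ ger0_norm ?(ltW h0).
have E4' : enorm (h *: v + w) ^+ 2 <= (h * N + W) ^+ 2 by apply: sq_le E4; exact: enorm_ge0.
have E5 : D * W <= D * eta * h by rewrite -mulrA ler_wpM2l.
have E6 : (h * N + W) ^+ 2 <= (h * (1 + N)) ^+ 2.
  apply: sq_le; first by rewrite addr_ge0 // mulr_ge0 // ltW.
  rewrite mulrDr mulr1 addrC lerD2r; apply: (le_trans hz).
  by apply: ler_piMl => //; exact: ltW.
have E7 : (h * (1 + N)) ^+ 2 <= h * (eps / 2).
  have -> : (h * (1 + N)) ^+ 2 = h * (h * (1 + N) ^+ 2) by ring.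
  apply: ler_wpM2l; first exact: ltW.
  rewrite -ler_pdivlMr ?exprn_gt0 ?ltr_wpDr //.
  apply: ltW; apply: (lt_le_trans hr); rewrite /r invfM mulrA.
  by rewrite mulrAC.
have E8 : D * eta * h <= eps / 4 * h by apply: ler_wpM2r => //; exact: ltW.
have -> : dist_set K x = D by [].
nra.
Qed.
End Step.
Section Meas.
Variable (R : realType).
Local Open Scope ereal_scope.

Lemma fam_len (U : set R) k (sf tf : nat -> R) : measurable U ->
  (forall i, (i < k)%N -> (sf i <= tf i)%R /\ (forall x, (sf i <= x)%R -> (x <= tf i)%R -> U x)) ->
  (forall i j, (i < k)%N -> (j < k)%N -> i <> j -> (tf i <= sf j)%R \/ (tf j <= sf i)%R) ->
  (\sum_(i < k) (tf i - sf i))%R%:E <= (@lebesgue_measure R) U.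
Proof.
move=> mU hI hD.
pose F := fun i : 'I_k => [set` Interval (BLeft (sf i)) (BLeft (tf i))].
have mF : forall i, measurable (F i) by move=> i; exact: measurable_itv.
have tF : trivIset [set: 'I_k] F.
  move=> i j _ _ [x []]; rewrite /F /= !in_itv /= => /andP[a1 a2] /andP[b1 b2].
  apply/val_inj; apply: contrapT => ij.
  have [h|h] := hD i j (ltn_ord i) (ltn_ord j) ij.
    have := le_lt_trans (le_trans h b1) a2; by rewrite ltxx.
  have := le_lt_trans (le_trans h a1) b2; by rewrite ltxx.
have E : forall i : 'I_k, (@lebesgue_measure R) (F i) = (tf i - sf i)%R%:E.
  move=> i; rewrite /F lebesgue_measure_itv /= lte_fin.
  have [le _] := hI i (ltn_ord i).
  case: ifPn => h; first by rewrite -EFinD.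
  have -> : tf i = sf i by apply/le_anti; rewrite le andbT leNgt.
  by rewrite subrr.
rewrite -sumEFin -(eq_bigr _ (fun i _ => E i)).
have := measure_bigsetU_ord (@lebesgue_measure R) xpredT mF tF => /= <-.
apply: le_measure.
- by rewrite inE; apply: bigsetU_measurable => i _; exact: mF.
- by rewrite inE.
move=> x; elim/big_rec: _ => [[]|i S _ IH [|/IH//]].
rewrite /F /= in_itv /= => /andP[a b].
have [_ hU] := hI i (ltn_ord i); apply: hU => //; exact: ltW.
Qed.
End Meas.
Section Creep.
Variables (R : realType) (n : nat).
Local Notation V := 'rV[R]_n.
Variables (phi : R -> V) (D : R -> R) (t0 T : R) (N : set R).
Hypotheses (tT : t0 <= T) (mN : measurable N) (N0 : (@lebesgue_measure R) N = 0%E)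
  (AC : abs_cont_on phi t0 T) (D0 : forall s, 0 <= D s) (Dt0 : D t0 = 0)
  (Dlip : forall s s', t0 <= s -> s <= T -> t0 <= s' -> s' <= T ->
     D s' <= D s + enorm (phi s' - phi s))
  (Ddini : forall s, t0 <= s -> s < T -> ~ N s -> forall eps, 0 < eps ->
     exists2 r, 0 < r & forall h, 0 < h -> h < r -> D (s + h) ^+ 2 <= D s ^+ 2 + eps * h).

Lemma cont_AC g : 0 < g -> exists2 rho, 0 < rho & forall a b, t0 <= a -> a <= b -> b <= T ->
  b - a < rho -> enorm (phi b - phi a) < g.
Proof.
move=> g0; have [d d0 H] := AC g0; exists d => // a b ta ab bT hab.
have h1 : forall i, (i < 1)%N -> t0 <= (fun=> a) i /\ (fun=> a) i <= (fun=> b) i /\ (fun=> b) i <= T.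
  by move=> i _.
have h2 : forall i j, (i < 1)%N -> (j < 1)%N -> i <> j ->
    (fun=> b) i <= (fun=> a) j \/ (fun=> b) j <= (fun=> a) i.
  by move=> i j; rewrite !ltnS !leqn0 => /eqP hi /eqP hj; rewrite hi hj.
by have := H 1%N _ _ h1 h2; rewrite !big_ord1; apply.
Qed.

Lemma D_step s s' : t0 <= s -> s <= T -> t0 <= s' -> s' <= T -> D s <= 1 ->
  enorm (phi s' - phi s) <= 1 -> D s' ^+ 2 <= D s ^+ 2 + 3 * enorm (phi s' - phi s).
Proof.
move=> h1 h2 h3 h4 h5 h6; have h7 := Dlip h1 h2 h3 h4.
have h8 := D0 s; have h9 := D0 s'; have h10 := enorm_ge0 (phi s' - phi s).
have : D s' ^+ 2 <= (D s + enorm (phi s' - phi s)) ^+ 2 by apply: sq_le.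
nra.
Qed.

Lemma creep_bound th : 0 < th -> th <= 1 / 20 -> D T ^+ 2 <= 5 * th.
Proof.
move=> th0 th20.
set eps := th / (T - t0 + 1).
have T1 : 0 < T - t0 + 1 by rewrite ltr_wpDl // subr_ge0.
have eps0 : 0 < eps by rewrite divr_gt0.
have epsT : forall s, t0 <= s -> s <= T -> eps * (s - t0) <= th.
  move=> s h1 h2; apply: (@le_trans _ _ (eps * (T - t0 + 1))).
    by apply: ler_wpM2l; [exact: ltW | lra].
  by rewrite /eps mulrVK // unitfE gt_eqF.
have [del del0 Hac] := AC th0.
have [U [oU NU mUN]] : exists U : set R, [/\ open U, N `<=` U & ((@lebesgue_measure R) (U `\` N) < del%:E)%E].
  apply: lebesgue_regularity_outer => //.
  have N0' : (@lebesgue_measure R N <= 0)%E by rewrite N0.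
  by apply: le_lt_trans N0' _; exact: ltry.
have mU : measurable U by exact: measurable_realfun.open_measurable.
have muU : ((@lebesgue_measure R) U < del%:E)%E.
  rewrite -(setDKU NU).
  have h1 := measureU2 (@lebesgue_measure R) (measurableD mU mN) mN.
  have N0' : (@lebesgue_measure R N <= 0)%E by rewrite N0.
  have h2 : (@lebesgue_measure R (U `\` N) + @lebesgue_measure R N <= @lebesgue_measure R (U `\` N) + 0)%E.
    exact: leeD2l.
  rewrite adde0 in h2.
  exact: (le_lt_trans h1 (le_lt_trans h2 mUN)).
pose fam k (sf tf : nat -> R) s :=
  (forall i, (i < k)%N -> [/\ t0 <= sf i, sf i <= tf i, tf i <= s &
      (forall x, sf i <= x -> x <= tf i -> U x)]) /\
  (forall i j, (i < k)%N -> (j < k)%N -> i <> j -> tf i <= sf j \/ tf j <= sf i).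
pose Sm k (sf tf : nat -> R) := \sum_(i < k) enorm (phi (tf i) - phi (sf i)).
have Sm0 : forall k sf tf, 0 <= Sm k sf tf by move=> k sf tf; apply: sumr_ge0 => i _; exact: enorm_ge0.
have fam_small : forall k sf tf s, fam k sf tf s -> s <= T -> Sm k sf tf < th.
  move=> k sf tf s [f1 f2] sT; apply: Hac => //.
    by move=> i /f1 [a b c _]; split => //; split => //; exact: le_trans sT.
  rewrite -lte_fin; apply: le_lt_trans muU; apply: fam_len => //.
  by move=> i /f1 [a b c e]; split.
have fam_mono : forall k sf tf a b, fam k sf tf a -> a <= b -> fam k sf tf b.
  move=> k sf tf a b [f1 f2] ab; split => // i /f1 [? ? c ?]; split => //; exact: le_trans ab.
have fam_ext : forall k sf tf a b, fam k sf tf a -> t0 <= a -> a <= b ->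
    (forall x, a <= x -> x <= b -> U x) ->
    exists sf' tf', fam k.+1 sf' tf' b /\ Sm k.+1 sf' tf' = Sm k sf tf + enorm (phi b - phi a).
  move=> k sf tf a b [f1 f2] ta ab abU.
  exists (fun i => if i == k then a else sf i), (fun i => if i == k then b else tf i); split.
    split.
      move=> i; rewrite ltnS leq_eqVlt => /orP[/eqP ->|ik].
        by rewrite eqxx; split; [exact: ta | exact: ab | exact: lexx | exact: abU].
      rewrite (ltn_eqF ik); have [f11 f12 f13 f14] := f1 i ik.
      by split; [exact: f11 | exact: f12 | exact: le_trans f13 ab | exact: f14].
    move=> i j; rewrite !ltnS => hi hj ij.
    have [ei|ik] : i = k \/ (i < k)%N by move: hi; rewrite leq_eqVlt => /orP[/eqP|]; [left|right].
      have [ej|jk] : j = k \/ (j < k)%N by move: hj; rewrite leq_eqVlt => /orP[/eqP|]; [left|right].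
        by exfalso; apply: ij; rewrite ei ej.
      rewrite ei eqxx (ltn_eqF jk); right; have [_ _ c _] := f1 j jk; exact: c.
    have [ej|jk] : j = k \/ (j < k)%N by move: hj; rewrite leq_eqVlt => /orP[/eqP|]; [left|right].
      rewrite ej eqxx (ltn_eqF ik); left; have [_ _ c _] := f1 i ik; exact: c.
    by rewrite (ltn_eqF ik) (ltn_eqF jk); apply: f2.
  rewrite /Sm big_ord_recr /= eqxx; congr (_ + _).
  by apply: eq_bigr => i _; rewrite /= (ltn_eqF (ltn_ord i)).
pose P s := forall eta, 0 < eta -> exists k, exists sf, exists tf,
  fam k sf tf s /\ D s ^+ 2 <= eps * (s - t0) + 3 * Sm k sf tf + eta.
have Pt0 : P t0.
  move=> eta eta0; exists 0%N, (fun _ => t0), (fun _ => t0); split.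
    by split => // i.
  by rewrite Dt0 expr0n /= /Sm big_ord0 subrr !mulr0 !add0r ltW.
have Pbound : forall s, t0 <= s -> s <= T -> P s -> D s <= 1.
  move=> s h1 h2 /(_ (1/4)) [//|k [sf [tf [fk hD]]]].
  have := fam_small _ _ _ _ fk h2; have := epsT s h1 h2; have := D0 s.
  move=> a b c; rewrite leNgt; apply/negP => d1.
  have : 1 < D s ^+ 2 by rewrite expr2; nra.
  lra.
pose S := [set t | t0 <= t /\ t <= T /\ forall s, t0 <= s -> s <= t -> P s].
have S0 : S t0 by split => //; split => // s a b; have -> : s = t0 by apply/le_anti; rewrite a b.
have hS : has_sup S by split; [exists t0 | exists T => t [_ []]].
set ss := sup S.
have t0ss : t0 <= ss by exact: sup_upper_bound.
have ssT : ss <= T by apply: ge_sup; [exists t0 | move=> t [_ []]].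
have PA : forall s, t0 <= s -> s < ss -> P s.
  move=> s h1 h2; have hp : 0 < ss - s by rewrite subr_gt0.
  have [t [_ [_ Ht]] st] := sup_adherent hp hS.
  apply: Ht => //; apply: ltW; move: st; rewrite opprB addrC subrK //.
have PB : P ss.
  have [ss0|ss0] := lerP ss t0.
    by have -> : ss = t0 by apply/le_anti; rewrite ss0 t0ss.
  move=> eta eta0.
  set e' := Num.min eta (1/4).
  have e'0 : 0 < e' by rewrite lt_min; apply/andP; split; lra.
  have e'eta : e' <= eta by rewrite ge_min lexx.
  have e'4 : e' <= 1/4 by rewrite ge_min lexx orbT.
  have g0 : 0 < Num.min 1 (e' / 6) by rewrite lt_min ltr01 divr_gt0.
  have [rho rho0 Hc] := cont_AC g0.
  set s := Num.max t0 (ss - rho / 2).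
  have ts : t0 <= s by rewrite le_max lexx.
  have sss : s < ss by rewrite gt_max ss0 /= ltrBlDr ltrDl divr_gt0.
  have ssr : ss - s < rho.
    have : ss - rho / 2 <= s by rewrite le_max lexx orbT.
    move=> h; have : 0 < rho / 2 by rewrite divr_gt0.
    lra.
  have sT : s <= T by apply: le_trans ssT; exact: ltW.
  have Ps := PA s ts sss.
  have Ds1 := Pbound s ts sT Ps.
  have e'2 : 0 < e' / 2 by rewrite divr_gt0.
  have [k [sf [tf [fk hD]]]] := Ps _ e'2.
  have he := Hc s ss ts (ltW sss) ssT ssr.
  have he1 : enorm (phi ss - phi s) < 1 by apply: lt_le_trans he _; rewrite ge_min lexx.
  have he2 : enorm (phi ss - phi s) < e' / 6 by apply: lt_le_trans he _; rewrite ge_min lexx orbT.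
  have hst := D_step ts sT t0ss ssT Ds1 (ltW he1).
  exists k, sf, tf; split; first exact: fam_mono fk (ltW sss).
  have : eps * (s - t0) <= eps * (ss - t0) by apply: ler_wpM2l; [exact: ltW | lra].
  lra.
have Sss : S ss.
  split => //; split => // s h1; rewrite le_eqVlt => /orP[/eqP ->|h2] //.
  exact: PA.
have ssTe : ss = T.
  apply/le_anti; rewrite ssT /=; rewrite leNgt; apply/negP => sslt.
  have [rho rho0 Hr] : exists2 rho, 0 < rho & forall s, ss < s -> s <= ss + rho -> s <= T -> P s.
    have [Nss|Nss] := pselect (N ss).
      have /nbhs_ballP[r r0 Hb] := oU ss (NU ss Nss).
      have [rho1 rho10 Hc] := cont_AC ltr01.
      exists (Num.min (r / 2) (rho1 / 2)); first by rewrite lt_min !divr_gt0.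
      move=> s h1 h2 h3 eta eta0.
      set e' := Num.min eta (1/4).
      have e'0 : 0 < e' by rewrite lt_min; apply/andP; split; lra.
      have e'eta : e' <= eta by rewrite ge_min lexx.
      have e'4 : e' <= 1/4 by rewrite ge_min lexx orbT.
      have [k [sf [tf [fk hD]]]] := PB _ e'0.
      have h2a : s <= ss + r / 2 by apply: le_trans h2 _; rewrite lerD2l ge_min lexx.
      have h2b : s <= ss + rho1 / 2 by apply: le_trans h2 _; rewrite lerD2l ge_min lexx orbT.
      have sU : forall x, ss <= x -> x <= s -> U x.
        move=> x x1 x2; apply: Hb; rewrite -ball_normE /ball_ /=.
        rewrite ler0_norm ?subr_le0 //; have : 0 < r / 2 by rewrite divr_gt0.
        have : r / 2 < r by rewrite ltr_pdivrMr // ltr_pMr // ltr1n.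
        lra.
      have [sf' [tf' [fk' hS']]] := fam_ext _ _ _ _ _ fk t0ss (ltW h1) sU.
      have ts : t0 <= s by apply: le_trans t0ss (ltW h1).
      have he1 : enorm (phi s - phi ss) < 1.
        apply: Hc => //; first exact: ltW.
        have : rho1 / 2 < rho1 by rewrite ltr_pdivrMr // ltr_pMr // ltr1n.
        lra.
      have Dss1 := Pbound ss t0ss ssT PB.
      have hst := D_step t0ss ssT ts h3 Dss1 (ltW he1).
      exists k.+1, sf', tf'; split => //; rewrite hS'.
      have : eps * (ss - t0) <= eps * (s - t0) by apply: ler_wpM2l; [exact: ltW | lra].
      lra.
    have [r r0 Hr] := Ddini t0ss sslt Nss eps0.
    exists (r / 2); first by rewrite divr_gt0.
    move=> s h1 h2 h3 eta eta0.
    have [k [sf [tf [fk hD]]]] := PB _ eta0.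
    have hp : 0 < s - ss by rewrite subr_gt0.
    have hr : s - ss < r.
      have : r / 2 < r by rewrite ltr_pdivrMr // ltr_pMr // ltr1n.
      lra.
    have hh := Hr (s - ss) hp hr.
    rewrite addrC subrK in hh.
    exists k, sf, tf; split; first exact: fam_mono fk (ltW h1).
    lra.
  have t'S : S (Num.min T (ss + rho)).
    split; first by rewrite le_min tT /=; apply: le_trans t0ss _; rewrite lerDl ltW.
    split; first by rewrite ge_min lexx.
    move=> s h1 h2; have [h3|h3] := lerP s ss.
      by case: Sss => _ [_ H]; apply: H.
    apply: Hr => //.
      by apply: le_trans h2 _; rewrite ge_min lexx orbT.
    by apply: le_trans h2 _; rewrite ge_min lexx.
  have := sup_upper_bound hS t'S; rewrite -/ss.
  have : ss < Num.min T (ss + rho) by rewrite lt_min sslt /= ltrDl.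
  move=> h1 h2; have := lt_le_trans h1 h2; by rewrite ltxx.
have PT : P T by rewrite -ssTe; exact: PB.
have [k [sf [tf [fk hD]]]] := PT _ th0.
have := fam_small _ _ _ _ fk (lexx T).
have := epsT T tT (lexx T).
lra.
Qed.

Lemma creep : D T = 0.
Proof.
have D2 : D T ^+ 2 <= 0.
  rewrite leNgt; apply/negP => hp.
  set th := Num.min (1 / 20) (D T ^+ 2 / 10).
  have th0 : 0 < th by rewrite lt_min; apply/andP; split; [lra | rewrite divr_gt0].
  have th20 : th <= 1 / 20 by rewrite ge_min lexx.
  have := creep_bound th0 th20.
  have : th <= D T ^+ 2 / 10 by rewrite ge_min lexx orbT.
  lra.
have : D T ^+ 2 = 0 by apply/le_anti; rewrite D2 sqr_ge0.
by move/eqP; rewrite sqrf_eq0 => /eqP.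
Qed.
End Creep.
Section Deriv.
Variables (R : realType) (n : nat).
Local Notation V := 'rV[R]_n.

Lemma deriv_approx (phi : R -> V) s : derivable phi s 1 -> forall eta : R, 0 < eta ->
  exists2 r : R, 0 < r & forall h : R, 0 < h -> h < r ->
    enorm (phi (s + h) - (phi s + h *: 'D_1 phi s)) <= eta * h.
Proof.
move=> d eta eta0.
have hc : (fun h : R => h^-1 *: ((phi \o shift s) (h *: 1) - phi s)) @ 0^' --> 'D_1 phi s := d.
have eta'0 : 0 < eta / n.+1%:R by rewrite divr_gt0.
move: hc => /cvgrPdist_lt /(_ _ eta'0).
rewrite /within /=.
move=> /nbhs_ballP [r r0 Hb]; exists r => // h h0 hr.
have hb : ball 0 r h by rewrite -ball_normE /= sub0r normrN ger0_norm // ltW.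
have := Hb h hb (negbT (gt_eqF h0)).
rewrite /= [_%:A]mulr1 [h + s]addrC => H.
have E : phi (s + h) - (phi s + h *: 'D_1 phi s) = - (h *: ('D_1 phi s - h^-1 *: (phi (s + h) - phi s))).
  by apply/rowP => i; rewrite !mxE; field; rewrite gt_eqF.
rewrite E enormN enormZ ger0_norm ?ltW // mulrC.
rewrite ltr_pM2r //.
apply: le_lt_trans (enorm_le_norm _) _; rewrite mulrC -ltr_pdivlMr ?ltr0n //.
Qed.
End Deriv.
Unset Implicit Arguments. Set Strict Implicit.
Theorem lemma16 (R : realType) (n : nat) (F : 'rV[R]_n -> set 'rV[R]_n)
  (K : set 'rV[R]_n) :
  usc F ->
  (forall x, F x !=set0) ->
  (forall x, compact (F x)) ->
  (forall x, convex_set (F x)) ->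
  closed K ->
  (forall x, ~ K x -> forall y, Proj K x y -> F x `<=` tangent_cone K y) ->
  forward_invariant F K.
Proof.
move=> _ _ _ _ cK Htan I phi t0 It0 Imin [Iint Iac Hae] Kt0 t It.
have K0 : K !=set0 by exists (phi t0).
have tT : t0 <= t := Imin t It.
have Isub : forall s, t0 <= s -> s <= t -> I s.
  by move=> s h1 h2; apply: (Iint t0 t) => //; rewrite h1 h2.
case: Hae => N [mN N0 NP].
apply: (dist0_in cK K0).
apply: (@creep R n phi (fun s => dist_set K (phi s)) t0 t N tT mN N0).
- exact: Iac.
- by move=> s; exact: dist_ge0.
- exact: dist_in.
- by move=> s s' _ _ _ _; exact: dist_lip.
move=> s h1 h2 Ns eps eps0.
have Is : I s by apply: Isub => //; exact: ltW.
have [ds Fs] : derivable phi s 1 /\ F (phi s) ('D_1 phi s).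
  have : ~ (~` [set x | I x -> derivable phi x 1 /\ F (phi x) ('D_1 phi x)]) s.
    by move=> /NP.
  by move=> /contrapT /(_ Is).
set v := 'D_1 phi s.
have [y Ky [hy hip]] : exists2 y, K y & enorm (phi s - y) = dist_set K (phi s) /\ ip (phi s - y) v <= 0.
  have [Kx|nKx] := pselect (K (phi s)).
    exists (phi s) => //; rewrite subrr enorm0 dist_in //; split => //.
    by rewrite /ip big1 // => i _; rewrite mxE mul0r.
  have [y Ky hy] := proj_exists (phi s) cK K0.
  exists y => //; split => //.
  apply: (prox_ineq Ky hy).
  exact: (Htan _ nKx y (conj Ky hy) _ Fs).
have [eta eta0 [r1 r10 H1]] := dini_step Ky hy hip eps0.
have [r2 r20 H2] := deriv_approx ds eta0.
exists (Num.min r1 r2); first by rewrite lt_min r10 r20.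
move=> h h0 hr; apply: H1 => //.
  by apply: lt_le_trans hr _; rewrite ge_min lexx.
apply: H2 => //; apply: lt_le_trans hr _; by rewrite ge_min lexx orbT.
Qed.
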